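(* Let $n\ge1$ and let $X$ be a vector field on $(\mathbf{R}^3)^n$ such that each component $X_j$, $j=1,\ldots,n$, is a (real) linear combination of cross products $p_i\times p_k$ of the variables $p_1,\ldots,p_n\in\mathbf{R}^3$. Let $Y=\nabla f^X$. Then $\nabla f^Y=3Y$.
   Context: For a vector field $Z$ on $(\mathbf{R}^3)^n$ with components $Z_1,\ldots,Z_n$, $f^Z$ denotes the real-valued function $f^Z(p)=Z_p\cdot p=\sum_{i=1}^n Z_i(p)\cdot p_i$ for $p=(p_1,\ldots,p_n)$; $\nabla$ is the Euclidean gradient on $(\mathbf{R}^3)^n=\mathbf{R}^{3n}$. *)

(* Defs.v *)
From HB Require Import structures.
From mathcomp Require Import all_boot all_order all_algebra.
From mathcomp Require Import all_classical all_reals all_analysis.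
Set Implicit Arguments. Unset Strict Implicit. Unset Printing Implicit Defensive.
Import Order.TTheory GRing.Theory Num.Theory.
Import numFieldNormedType.Exports.
Local Open Scope ring_scope.

(* A point p = (p_1,...,p_n) of (R^3)^n is an n x 3 matrix; p_i = row i p. *)
Definition config (R : realType) (n : nat) := 'M[R]_(n, 3).

Definition cmp (R : realType) (u : 'rV[R]_3) (k : nat) : R := u 0 (inord k).

Definition cross (R : realType) (u v : 'rV[R]_3) : 'rV[R]_3 :=
  \row_(a < 3)
    match val a with
    | 0 => cmp u 1 * cmp v 2 - cmp u 2 * cmp v 1
    | 1 => cmp u 2 * cmp v 0 - cmp u 0 * cmp v 2
    | _ => cmp u 0 * cmp v 1 - cmp u 1 * cmp v 0
    end.

Definition dot3 (R : realType) (u v : 'rV[R]_3) : R := \sum_(a < 3) u 0 a * v 0 a.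

Definition fvf (R : realType) (n : nat) (Z : 'M[R]_(n, 3) -> 'M[R]_(n, 3))
  (p : 'M[R]_(n, 3)) : R := \sum_(i < n) dot3 (row i (Z p)) (row i p).

Definition grad (R : realType) (n : nat) (f : 'M[R]_(n, 3) -> R)
  (p : 'M[R]_(n, 3)) : 'M[R]_(n, 3) :=
  \matrix_(i < n, a < 3) ('D_(delta_mx i a) f p).

(* Main.v *)
Require Import Defs.
From HB Require Import structures.
From mathcomp Require Import all_boot all_order all_algebra.
From mathcomp Require Import all_classical all_reals all_analysis.
From mathcomp Require Import ring.
Import Order.TTheory GRing.Theory Num.Theory.
Import numFieldNormedType.Exports.
Local Open Scope ring_scope.
Local Open Scope classical_set_scope.

Lemma poly_derive (R : realType) (n : nat) (F : 'M[R]_(n,3) -> R) p v (G H K : R) :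
  (forall h : R, F (h *: v + p) = F p + h * G + h^+2 * H + h^+3 * K) -> is_derive p v F G.
Proof.
move=> eF.
pose g := fun h : R => G + h * H + h^+2 * K.
have gc : g @ (0:R)^' --> G.
  have hf : g @ (0:R)^' `=>` g @ nbhs (0:R) := cvg_fmap2 (@nbhs_dnbhs _ (0:R)).
  apply: cvg_trans hf _.
  have -> : G = g 0 by rewrite /g !mul0r expr0n /= mul0r !addr0.
  apply: cvgD; first apply: cvgD; first exact: cvg_cst.
    by apply: cvgMr_tmp; exact: cvg_id.
  by apply: cvgMr_tmp; rewrite expr2; apply: cvgM; exact: cvg_id.
have dq : (fun h : R => h^-1 *: ((F \o shift p) (h *: v) - F p)) @ (0:R)^' --> G.
  apply: cvg_trans gc.
  apply: near_eq_cvg; near=> h.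
  have h0 : h != 0 by near: h; exact: nbhs_dnbhs_neq.
  rewrite /= /shift /= eF /g /GRing.scale /=.
  by field.
split; first by apply/cvg_ex; exists G.
exact: cvg_lim.
Unshelve. all: end_near.
Qed.
Section Alg.
Variable R : realType.
Implicit Types u v w : 'rV[R]_3.

Lemma crossDl u v w : cross (u + v) w = cross u w + cross v w.
Proof. by apply/rowP => a; rewrite !mxE /cmp !mxE; case: (val a) => [|[|?]]; ring. Qed.
Lemma crossZl (x : R) u w : cross (x *: u) w = x *: cross u w.
Proof. by apply/rowP => a; rewrite !mxE /cmp !mxE; case: (val a) => [|[|?]]; ring. Qed.
Lemma crossDr u v w : cross w (u + v) = cross w u + cross w v.
Proof. by apply/rowP => a; rewrite !mxE /cmp !mxE; case: (val a) => [|[|?]]; ring. Qed.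
Lemma crossZr (x : R) u w : cross w (x *: u) = x *: cross w u.
Proof. by apply/rowP => a; rewrite !mxE /cmp !mxE; case: (val a) => [|[|?]]; ring. Qed.
Lemma dot3Dl u v w : dot3 (u + v) w = dot3 u w + dot3 v w.
Proof. by rewrite /dot3 -big_split; apply: eq_bigr => a _; rewrite !mxE mulrDl. Qed.
Lemma dot3Zl (x : R) u w : dot3 (x *: u) w = x * dot3 u w.
Proof. by rewrite /dot3 mulr_sumr; apply: eq_bigr => a _; rewrite !mxE mulrA. Qed.
Lemma dot3Dr u v w : dot3 w (u + v) = dot3 w u + dot3 w v.
Proof. by rewrite /dot3 -big_split; apply: eq_bigr => a _; rewrite !mxE mulrDr. Qed.
Lemma dot3Zr (x : R) u w : dot3 w (x *: u) = x * dot3 w u.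
Proof. by rewrite /dot3 mulr_sumr; apply: eq_bigr => a _; rewrite !mxE mulrCA. Qed.
Lemma dot30l w : dot3 0 w = 0.
Proof. by rewrite -(scale0r 0) dot3Zl mul0r. Qed.

Variable n : nat.
Variable c : 'I_n -> 'I_n -> 'I_n -> R.
Implicit Types p q r x y : 'M[R]_(n, 3).

Lemma rowD i x y : row i (x + y) = row i x + row i y.
Proof. by apply/rowP => a; rewrite !mxE. Qed.
Lemma rowZ i (a : R) x : row i (a *: x) = a *: row i x.
Proof. by apply/rowP => b; rewrite !mxE. Qed.

Definition Bf p q r : R := \sum_(j < n) \sum_(i < n) \sum_(k < n)
  c j i k * dot3 (cross (row i p) (row k q)) (row j r).

Lemma B1D x y q r : Bf (x + y) q r = Bf x q r + Bf y q r.
Proof.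
rewrite /Bf -big_split; apply: eq_bigr => j _; rewrite -big_split; apply: eq_bigr => i _.
rewrite -big_split; apply: eq_bigr => k _.
by rewrite rowD crossDl dot3Dl mulrDr.
Qed.
Lemma B2D x y q r : Bf q (x + y) r = Bf q x r + Bf q y r.
Proof.
rewrite /Bf -big_split; apply: eq_bigr => j _; rewrite -big_split; apply: eq_bigr => i _.
rewrite -big_split; apply: eq_bigr => k _.
by rewrite rowD crossDr dot3Dl mulrDr.
Qed.
Lemma B3D x y q r : Bf q r (x + y) = Bf q r x + Bf q r y.
Proof.
rewrite /Bf -big_split; apply: eq_bigr => j _; rewrite -big_split; apply: eq_bigr => i _.
rewrite -big_split; apply: eq_bigr => k _.
by rewrite rowD dot3Dr mulrDr.
Qed.
Lemma B1Z (a : R) x q r : Bf (a *: x) q r = a * Bf x q r.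
Proof.
rewrite /Bf mulr_sumr; apply: eq_bigr => j _; rewrite mulr_sumr; apply: eq_bigr => i _.
rewrite mulr_sumr; apply: eq_bigr => k _.
by rewrite rowZ crossZl dot3Zl mulrCA.
Qed.
Lemma B2Z (a : R) x q r : Bf q (a *: x) r = a * Bf q x r.
Proof.
rewrite /Bf mulr_sumr; apply: eq_bigr => j _; rewrite mulr_sumr; apply: eq_bigr => i _.
rewrite mulr_sumr; apply: eq_bigr => k _.
by rewrite rowZ crossZr dot3Zl mulrCA.
Qed.
Lemma B3Z (a : R) x q r : Bf q r (a *: x) = a * Bf q r x.
Proof.
rewrite /Bf mulr_sumr; apply: eq_bigr => j _; rewrite mulr_sumr; apply: eq_bigr => i _.
rewrite mulr_sumr; apply: eq_bigr => k _.
by rewrite rowZ dot3Zr mulrCA.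
Qed.

Definition Gf p (z : 'M[R]_(n,3)) := Bf z p p + Bf p z p + Bf p p z.

Lemma GD p x y : Gf p (x + y) = Gf p x + Gf p y.
Proof. rewrite /Gf B1D B2D B3D; ring. Qed.
Lemma GZ p (a : R) x : Gf p (a *: x) = a * Gf p x.
Proof. rewrite /Gf B1Z B2Z B3Z; ring. Qed.
Lemma G0 p : Gf p 0 = 0.
Proof. by rewrite -(scale0r 0) GZ mul0r. Qed.

Lemma Gsum p : \sum_(i < n) \sum_(a < 3) Gf p (delta_mx i a) * p i a = 3 * Bf p p p.
Proof.
have -> : 3 * Bf p p p = Gf p p by rewrite /Gf; ring.
rewrite {4}(matrix_sum_delta p) (big_morph (Gf p) (GD p) (G0 p)).
apply: eq_bigr => i _; rewrite (big_morph (Gf p) (GD p) (G0 p)).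
by apply: eq_bigr => a _; rewrite GZ mulrC.
Qed.

Lemma Bexpand (h : R) (v : 'M[R]_(n,3)) p : Bf (h *: v + p) (h *: v + p) (h *: v + p) =
  Bf p p p + h * Gf p v + h ^+ 2 * (Bf v v p + Bf v p v + Bf p v v) + h ^+ 3 * Bf v v v.
Proof. rewrite /Gf !(B1D, B2D, B3D) !(B1Z, B2Z, B3Z); ring. Qed.

End Alg.
Arguments Bf {R n} c p q r.
Arguments Gf {R n} c p z.

Theorem proposition4p4 (R : realType) (n : nat) (hn : (0 < n)%N)
  (X : 'M[R]_(n, 3) -> 'M[R]_(n, 3))
  (hX : exists c : 'I_n -> 'I_n -> 'I_n -> R,
      forall (p : 'M[R]_(n, 3)) (j : 'I_n),
        row j (X p) = \sum_(i < n) \sum_(k < n) c j i k *: cross (row i p) (row k p)) :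
  let Y := grad (fvf X) in
  forall p : 'M[R]_(n, 3), grad (fvf Y) p = 3 *: Y p.
Proof.
move=> Y p; case: hX => c hc.
have eF : forall q, fvf X q = Bf c q q q.
  move=> q; rewrite /fvf /Bf; apply: eq_bigr => j _; rewrite hc.
  rewrite (big_morph (fun u => dot3 u (row j q)) (fun x y => @dot3Dl _ x y _) (@dot30l _ _)).
  apply: eq_bigr => i _.
  rewrite (big_morph (fun u => dot3 u (row j q)) (fun x y => @dot3Dl _ x y _) (@dot30l _ _)).
  by apply: eq_bigr => k _; rewrite dot3Zl.
have FD : forall q v, is_derive q v (fvf X) (Gf c q v).
  move=> q v; apply: (@poly_derive _ _ _ _ _ _ (Bf c v v q + Bf c v q v + Bf c q v v) (Bf c v v v)).
  by move=> h; rewrite !eF Bexpand.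
have eY : fvf Y = (3:R) \*: fvf X.
  apply: funext => q; rewrite /= eF.
  rewrite -[_ *: _]/(_ * _) -Gsum /fvf.
  apply: eq_bigr => i _; rewrite /dot3; apply: eq_bigr => a _.
  by rewrite !mxE derive_val.
apply/matrixP => i a; rewrite !mxE eY deriveZ; last exact: ex_derive.
by [].
Qed.
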